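(* Restrict attention to feasible strategies $\boldsymbol{\phi}\in\mathcal{D}_{\boldsymbol{\phi}}(\boldsymbol{r})$ whose traffic satisfies $t_i(a,k)>0$ for all $i\in\mathcal{V}$ and $(a,k)\in\mathcal{S}$. On this set the map $\boldsymbol{\phi}\mapsto\boldsymbol{f}(\boldsymbol{\phi})=[f_{ij}(a,k),g_i(a,k)]$ is a bijection onto its image, with inverse $\boldsymbol{f}\mapsto\boldsymbol{\phi}(\boldsymbol{f})$ given by $\phi_{ij}(a,k)=f_{ij}(a,k)/t_i(a,k)$ and $\phi_{i0}(a,k)=g_i(a,k)/t_i(a,k)$, where $t_i(a,k)$ is computed from $\boldsymbol{f}$ by $t_i(a,k)=\sum_j f_{ij}(a,k)+g_i(a,k)$ (plus, if $k=|\mathcal{T}_a|$ and $i=d_a$, the arriving traffic). Moreover, $T$ is geodesically convex in $\boldsymbol{\phi}$ on this set: for any two such strategies $\boldsymbol{\phi}_1,\boldsymbol{\phi}_2$, the curve $\gamma_{\boldsymbol{\phi}_1\boldsymbol{\phi}_2}(s)=\boldsymbol{\phi}\big((1-s)\boldsymbol{f}(\boldsymbol{\phi}_1)+s\,\boldsymbol{f}(\boldsymbol{\phi}_2)\big)$, $s\in[0,1]$, joins $\boldsymbol{\phi}_1$ and $\boldsymbol{\phi}_2$ within the feasible set, and $s\mapsto T(\gamma_{\boldsymbol{\phi}_1\boldsymbol{\phi}_2}(s))$ is convex on $[0,1]$.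
   Context: Service-chain computing network model. $\mathcal{G}=(\mathcal{V},\mathcal{E})$ is a directed, strongly connected graph whose links are bidirectional. $\mathcal{A}$ is a finite set of applications; application $a$ has a destination $d_a\in\mathcal{V}$ and a chain of $|\mathcal{T}_a|$ tasks performed in order. The set of stages is $\mathcal{S}=\{(a,k): a\in\mathcal{A}, k=0,1,\dots,|\mathcal{T}_a|\}$, with packet sizes $L_{(a,k)}>0$. Exogenous input rates are $r_i(a)\ge 0$. The forwarding strategy $\boldsymbol{\phi}=[\phi_{ij}(a,k)]_{(a,k)\in\mathcal{S},i\in\mathcal{V},j\in\{0\}\cup\mathcal{V}}$ has $\phi_{ij}(a,k)\in[0,1]$; for $j\in\mathcal{V}$ it is the fraction of node $i$'s stage-$(a,k)$ traffic sent to node $j$ (with $\phi_{ij}(a,k)=0$ if $(i,j)\notin\mathcal{E}$), and $\phi_{i0}(a,k)$ is the fraction sent to $i$'s local processor, which converts each stage-$(a,k)$ packet into one stage-$(a,k+1)$ packet; $\phi_{i0}(a,|\mathcal{T}_a|)=0$. Flow conservation: $\sum_{j\in\{0\}\cup\mathcal{V}}\phi_{ij}(a,k)=0$ if $k=|\mathcal{T}_a|$ and $i=d_a$, and $=1$ otherwise. Traffic $t_i(a,k)$ satisfies $t_i(a,0)=\sum_{j\in\mathcal{V}}t_j(a,0)\phi_{ji}(a,0)+r_i(a)$ and, for $k\ge1$, $t_i(a,k)=\sum_{j\in\mathcal{V}}t_j(a,k)\phi_{ji}(a,k)+t_i(a,k-1)\phi_{i0}(a,k-1)$. Link flows $f_{ij}(a,k)=t_i(a,k)\phi_{ij}(a,k)$,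 processor inputs $g_i(a,k)=t_i(a,k)\phi_{i0}(a,k)$; the flow vector $\boldsymbol{f}=[f_{ij}(a,k),g_i(a,k)]$ satisfies the linear conservation $\sum_j f_{ji}(a,k)+g_i(a,k-1)=\sum_j f_{ij}(a,k)+g_i(a,k)$ (with $g_i(a,-1):=r_i(a)$, and the right side replaced by $0$ plus the exiting traffic at $i=d_a$, $k=|\mathcal{T}_a|$), nonnegativity, and so forms a convex set. Total link flow $F_{ij}=\sum_{(a,k)}L_{(a,k)}f_{ij}(a,k)$, workload $G_i=\sum_{(a,k)}w_i(a,k)g_i(a,k)$ with $w_i(a,k)>0$. $D_{ij}$, $C_i$ are increasing, continuously differentiable, convex. Total cost $T(\boldsymbol{\phi})=\sum_{(i,j)\in\mathcal{E}}D_{ij}(F_{ij})+\sum_{i\in\mathcal{V}}C_i(G_i)$. $\mathcal{D}_{\boldsymbol{\phi}}(\boldsymbol{r})$ is the set of $\boldsymbol{\phi}$ satisfying flow conservation with finite total cost. A function $h$ on a set $C\subset\mathbb{R}^n$ is geodesically convex with respect to a family of curves $\gamma_{x_1x_2}:[0,1]\to C$ joining $x_1$ to $x_2$ if $s\mapsto h(\gamma_{x_1x_2}(s))$ is convex for all $x_1,x_2\in C$. *)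

(* Defs.v *)
From HB Require Import structures.
From Stdlib Require Import ClassicalEpsilon.
From mathcomp Require Import all_boot all_order all_algebra.
From mathcomp Require Import all_classical all_reals all_analysis.
Set Implicit Arguments. Unset Strict Implicit. Unset Printing Implicit Defensive.
Import Order.TTheory GRing.Theory Num.Theory numFieldNormedType.Exports.
Local Open Scope ring_scope.

Section Model.
Context {R : realType} {V A : finType}.
(* E : links; d : destinations; nt a = |T_a|; r i a = r_i(a). *)
Variables (E : rel V) (d : A -> V) (nt : A -> nat) (r : V -> A -> R).

(* phi a k i (Some j) = phi_ij(a,k);  phi a k i None = phi_i0(a,k).
   Only the values on stages k <= nt a are meaningful. *)
Definition strategy := A -> nat -> V -> option V -> R.
(* flow vectors have the same shape: F a k i (Some j) = f_ij(a,k),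
   F a k i None = g_i(a,k). *)
Definition flowvec := A -> nat -> V -> option V -> R.
Definition trafficvec := A -> nat -> V -> R.

Definition is_last (a : A) (k : nat) (i : V) : bool := (k == nt a) && (i == d a).

Definition eqS (F G : A -> nat -> V -> option V -> R) :=
  forall a (k : nat), (k <= nt a)%N -> forall i j, F a k i j = G a k i j.

Definition flow_conservation (phi : strategy) :=
  forall a (k : nat), (k <= nt a)%N -> forall i : V,
    (forall j, 0 <= phi a k i j <= 1) /\
    (forall j : V, ~~ E i j -> phi a k i (Some j) = 0) /\
    (k = nt a -> phi a k i None = 0) /\
    (\sum_(j : option V) phi a k i j = if is_last a k i then 0 else 1).

Definition is_traffic (phi : strategy) (t : trafficvec) :=
  forall a (k : nat), (k <= nt a)%N -> forall i : V,
    t a k i = \sum_(j : V) t a k j * phi a k j (Some i)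
              + (if k == 0%N then r i a else t a k.-1 i * phi a k.-1 i None).

Definition traffic_well_defined (phi : strategy) :=
  exists t, is_traffic phi t /\
    forall t', is_traffic phi t' ->
      forall a (k : nat), (k <= nt a)%N -> forall i, t' a k i = t a k i.

Definition feasible (phi : strategy) :=
  flow_conservation phi /\ traffic_well_defined phi.

Definition traffic (phi : strategy) : trafficvec :=
  epsilon (inhabits (fun _ _ _ => 0)) (is_traffic phi).

Definition positive_traffic (phi : strategy) :=
  forall a (k : nat), (k <= nt a)%N -> forall i, 0 < traffic phi a k i.

Definition flow (phi : strategy) : flowvec :=
  fun a k i j => traffic phi a k i * phi a k i j.

Definition traffic_of_flow (F : flowvec) : trafficvec :=
  fun a k i => \sum_(j : option V) F a k i j +
    (if is_last a k i then
       \sum_(j : V) F a k j (Some i) + (if k == 0%N then r i a else F a k.-1 i None)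
     else 0).

Definition strategy_of_flow (F : flowvec) : strategy :=
  fun a k i j => F a k i j / traffic_of_flow F a k i.

Definition comb (s : R) (F1 F2 : flowvec) : flowvec :=
  fun a k i j => (1 - s) * F1 a k i j + s * F2 a k i j.

Variables (L : A -> nat -> R) (w : V -> A -> nat -> R)
          (D : V -> V -> R -> R) (C : V -> R -> R).

Definition link_flow (phi : strategy) (i j : V) : R :=
  \sum_(a : A) \sum_(k < (nt a).+1) L a k * flow phi a k i (Some j).

Definition workload (phi : strategy) (i : V) : R :=
  \sum_(a : A) \sum_(k < (nt a).+1) w i a k * flow phi a k i None.

Definition total_cost (phi : strategy) : R :=
  \sum_(i : V) \sum_(j : V | E i j) D i j (link_flow phi i j)
  + \sum_(i : V) C i (workload phi i).

End Model.

Definition convex_fun {R : realType} (h : R -> R) :=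
  forall x y t : R, 0 <= t <= 1 -> h ((1 - t) * x + t * y) <= (1 - t) * h x + t * h y.

Definition convex_on01 {R : realType} (h : R -> R) :=
  forall x y t : R, 0 <= x <= 1 -> 0 <= y <= 1 -> 0 <= t <= 1 ->
    h ((1 - t) * x + t * y) <= (1 - t) * h x + t * h y.

Definition cost_fun {R : realType} (h : R -> R) :=
  (forall x y : R, x <= y -> h x <= h y) /\
  (forall x : R, derivable h x 1) /\ (forall x : R, continuous_at x (derive1 h)) /\ convex_fun h.

(* Main.v *)
Require Import Defs.
From HB Require Import structures.
From Stdlib Require Import ClassicalEpsilon.
From mathcomp Require Import all_boot all_order all_algebra.
From mathcomp Require Import all_classical all_reals all_analysis.
From mathcomp Require Import ring lra.
Import Order.TTheory GRing.Theory Num.Theory numFieldNormedType.Exports.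
Local Open Scope ring_scope.

Lemma sum_optP (R : nzRingType) (V : finType) (G : option V -> R) :
  \sum_(o : option V) G o = G None + \sum_(x : V) G (Some x).
Proof.
have -> : index_enum (option V) = None :: [seq Some x | x <- index_enum V].
  by rewrite /index_enum !unlock /= /option_enum !unlock.
by rewrite big_cons big_map.
Qed.

Lemma sumVP (R : nzRingType) (V : finType) (G : V -> R) :
  \sum_(p < #|V|) G (enum_val p) = \sum_(x : V) G x.
Proof. rewrite (reindex (@enum_rank V)) /=; last first.
  by exists enum_val => x _; rewrite ?enum_rankK ?enum_valK.
by apply: eq_bigr => x _; rewrite enum_rankK.
Qed.

Lemma stat_vec (R : fieldType) (V : finType) (Q : V -> V -> R) (u : V -> R) :
  (exists i, u i != 0) -> (forall j, \sum_i Q j i * u i = u j) ->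
  exists y : V -> R, (exists i, y i != 0) /\ forall i, y i = \sum_j y j * Q j i.
Proof.
move=> [i0 ui0] hu.
pose M : 'M[R]_#|V| := (1%:M - \matrix_(p, q) Q (enum_val p) (enum_val q)).
pose c : 'rV[R]_#|V| := \row_q u (enum_val q).
have cM : c *m M^T = 0.
  apply/rowP => p; rewrite !mxE.
  under eq_bigr => q _ do rewrite !mxE mulrBr.
  rewrite sumrB (bigD1 p) //= big1 ?addr0; last by move=> q /negbTE qp; rewrite eq_sym qp mulr0.
  rewrite eqxx mulr1 -[X in X - _ = _](hu (enum_val p)) -sumVP.
  apply/eqP; rewrite subr_eq0; apply/eqP; apply: eq_bigr => q _; rewrite mulrC.
  by [].
have : \det M^T == 0.
  apply/det0P; exists c => //; apply/eqP => /rowP /(_ (enum_rank i0)).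
  by rewrite !mxE enum_rankK; apply/eqP.
rewrite det_tr => /det0P [v vn0 vM].
exists (fun i => v 0 (enum_rank i)); split.
  apply/existsP; apply: contraR vn0 => /existsPn H; apply/eqP/rowP => q.
  rewrite mxE; have := H (enum_val q); rewrite enum_valK negbK => /eqP //.
move=> i; move/rowP: vM => /(_ (enum_rank i)); rewrite !mxE.
under eq_bigr => p _ do rewrite !mxE mulrBr.
rewrite sumrB (bigD1 (enum_rank i)) //= big1 ?addr0; last by move=> q /negbTE qp; rewrite qp mulr0.
rewrite eqxx mulr1 => /eqP; rewrite subr_eq0 => /eqP ->.
rewrite enum_rankK -(@sumVP _ _ (fun j => v 0 (enum_rank j) * Q j i)); apply: eq_bigr => p _; rewrite enum_valK //.
Qed.

Lemma sum_ge_term (R : numDomainType) (V : finType) (F : V -> R) j :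
  (forall i, 0 <= F i) -> F j <= \sum_i F i.
Proof.
move=> h; rewrite (bigD1 j) //= lerDl; apply: sumr_ge0 => i _; exact: h.
Qed.

Lemma kernel0 (R : realFieldType) (V : finType) (G P1 : V -> option V -> R) :
 (forall j o, 0 <= G j o) -> (forall j o, 0 <= P1 j o) ->
 (forall j o, G j o = 0 -> P1 j o = 0) ->
 (forall j, \sum_o P1 j o = \sum_o G j o) -> (forall j, \sum_o G j o <= 1) ->
 (forall y : V -> R, (forall i, y i = \sum_j y j * P1 j (Some i)) ->
     (forall i, y i != 0 -> P1 i None = 0) -> forall i, y i = 0) ->
 forall x : V -> R, (forall i, x i = \sum_j x j * G j (Some i)) -> forall i, x i = 0.
Proof.
move=> G0 P0 GP sP G1 Pu x hx i1.
pose z i : R := `|x i|.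
have z0 : forall i, 0 <= z i by move=> i; exact: normr_ge0.
have hz : forall i, z i <= \sum_j z j * G j (Some i).
  move=> i; rewrite /z {1}hx; apply: le_trans (ler_norm_sum _ _ _) _.
  by apply: ler_sum => j _; rewrite normrM (ger0_norm (G0 _ _)).
pose rl j := \sum_i G j (Some i).
have rl1 : forall j, G j None + rl j <= 1 by move=> j; rewrite /rl -sum_optP.
have rl0 : forall j, 0 <= rl j by move=> j; apply: sumr_ge0 => i _.
have e0 : \sum_i \sum_j z j * G j (Some i) = \sum_j z j * rl j.
  by rewrite exchange_big /=; apply: eq_bigr => j _; rewrite mulr_sumr.
have le1 : \sum_i z i <= \sum_j z j * rl j by rewrite -e0; apply: ler_sum => i _.
have le2 : \sum_j z j * rl j <= \sum_j z j.
  apply: ler_sum => j _; apply: ler_piMr => //.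
  have := rl1 j; have := G0 j None; lra.
have eqz : forall i, z i = \sum_j z j * G j (Some i).
  have H : \sum_i (\sum_j z j * G j (Some i) - z i) = 0.
    by rewrite sumrB e0; lra.
  have hz' : forall i, true -> 0 <= \sum_j z j * G j (Some i) - z i.
    by move=> i _; rewrite subr_ge0.
  move=> i; have := psumr_eq0P hz' H.
  move=> /(_ i isT) /eqP; rewrite subr_eq0 => /eqP ->. done.
have eqr : forall j, z j * (1 - rl j) = 0.
  have H : \sum_j (z j - z j * rl j) = 0 by rewrite sumrB; lra.
  move=> j; rewrite mulrBr mulr1.
  apply: (psumr_eq0P _ H) => // k _; rewrite subr_ge0; apply: ler_piMr => //.
  have := rl1 k; have := G0 k None; lra.
apply/eqP; apply: contraT => xi1.
pose S j := 0 < z j.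
have zS : forall j, ~~ S j -> z j = 0.
  by move=> j; rewrite /S -leNgt => h; apply/eqP; rewrite eq_le h z0.
have rlS : forall j, S j -> rl j = 1.
  move=> j Sj; have := eqr j; move/eqP; rewrite mulf_eq0 (gt_eqF Sj) /= subr_eq0.
  by move/eqP <-.
have GNS : forall j, S j -> G j None = 0.
  move=> j Sj; have := rl1 j; rewrite rlS // => h; apply/eqP; rewrite eq_le G0 andbT; lra.
have GSo : forall j i, S j -> ~~ S i -> G j (Some i) = 0.
  move=> j i Sj Si; have h : z j * G j (Some i) <= z i.
    rewrite (eqz i); apply: (@sum_ge_term R V (fun k => z k * G k (Some i)) j) => k.
    exact: mulr_ge0.
  rewrite (zS i Si) in h; have : z j * G j (Some i) = 0.
    by apply/eqP; rewrite eq_le h mulr_ge0.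
  by move/eqP; rewrite mulf_eq0 (gt_eqF Sj) /= => /eqP.
have PNS : forall j, S j -> P1 j None = 0 by move=> j Sj; apply: GP; exact: GNS.
have PSo : forall j i, S j -> ~~ S i -> P1 j (Some i) = 0.
  by move=> j i Sj Si; apply: GP; exact: GSo.
have PS1 : forall j, S j -> \sum_i P1 j (Some i) = 1.
  move=> j Sj; have := sP j; rewrite !sum_optP PNS // GNS // !add0r => ->.
  exact: rlS.
pose Q j i := if S j then P1 j (Some i) else 0.
pose u i : R := if S i then 1 else 0.
have [y [[iy yn0] hy]] : exists y : V -> R, (exists i, y i != 0) /\
    forall i, y i = \sum_j y j * Q j i.
  apply: (@stat_vec _ _ Q u).
    exists i1; rewrite /u; case: ifP => // /negbT /zS /eqP.
    by rewrite normr_eq0 (negbTE xi1).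
  move=> j; rewrite /Q /u; case: ifP => Sj; last by rewrite big1 // => i _; rewrite mul0r.
  rewrite -[RHS](PS1 j Sj); apply: eq_bigr => i _; case: ifP => Si; first by rewrite mulr1.
  by rewrite mulr0 PSo // Si.
have yS : forall i, ~~ S i -> y i = 0.
  move=> i Si; rewrite hy big1 // => j _; rewrite /Q; case: ifP => Sj.
    by rewrite PSo // mulr0.
  by rewrite mulr0.
have hy1 : forall i, y i = \sum_j y j * P1 j (Some i).
  move=> i; rewrite {1}hy; apply: eq_bigr => j _; rewrite /Q; case: ifP => // /negbT Sj.
  by rewrite yS // !mul0r.
have hy2 : forall i, y i != 0 -> P1 i None = 0.
  move=> i yi; apply: PNS; apply: contraR yi => Si; rewrite yS //.
by move: yn0; rewrite (Pu y hy1 hy2 iy) eqxx.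
Qed.

Section Model2.
Context {R : realType} {V A : finType}.
Variables (E : rel V) (d : A -> V) (nt : A -> nat) (r : V -> A -> R).

Lemma traffic_is {phi : @strategy R V A} : traffic_well_defined nt r phi ->
  is_traffic nt r phi (traffic nt r phi).
Proof. by case=> t [ht _]; rewrite /traffic; apply: epsilon_spec; exists t. Qed.

Lemma traffic_uniq {phi : @strategy R V A} {t' : @trafficvec R V A} :
  traffic_well_defined nt r phi -> is_traffic nt r phi t' ->
  forall a k, (k <= nt a)%N -> forall i, t' a k i = traffic nt r phi a k i.
Proof.
move=> tw ht' a k hk i; have [t [ht hu]] := tw.
by rewrite (hu _ ht' a k hk i) (hu _ (traffic_is tw) a k hk i).
Qed.

Lemma fc_last (phi : @strategy R V A) a k i : flow_conservation E d nt phi ->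
  (k <= nt a)%N -> is_last d nt a k i -> forall j, phi a k i j = 0.
Proof.
move=> fc hk hl j; have [h01 [_ [_ hs]]] := fc a k hk i; rewrite hl in hs.
apply: (psumr_eq0P _ hs) => // o _; by case/andP: (h01 o).
Qed.

Lemma tof_flow (phi : @strategy R V A) a k i : feasible E d nt r phi -> (k <= nt a)%N ->
  traffic_of_flow d nt r (flow nt r phi) a k i = traffic nt r phi a k i.
Proof.
move=> [fc tw] hk; rewrite /traffic_of_flow /flow -mulr_sumr.
have [_ [_ [_ hs]]] := fc a k hk i; rewrite hs; case: ifP => hl.
  by rewrite mulr0 add0r; symmetry; exact: (traffic_is tw a k hk i).
by rewrite mulr1 addr0.
Qed.

Lemma sof_flow (phi : @strategy R V A) : feasible E d nt r phi -> positive_traffic nt r phi ->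
  eqS nt (strategy_of_flow d nt r (flow nt r phi)) phi.
Proof.
move=> H pos a k hk i j; rewrite /strategy_of_flow tof_flow // /flow mulrC mulKf //.
exact: lt0r_neq0 (pos a k hk i).
Qed.

Lemma tof_eqS (F1 F2 : @flowvec R V A) a k i : eqS nt F1 F2 -> (k <= nt a)%N ->
  traffic_of_flow d nt r F1 a k i = traffic_of_flow d nt r F2 a k i.
Proof.
move=> H hk; rewrite /traffic_of_flow.
have hk1 : (k.-1 <= nt a)%N by apply: leq_trans (leq_pred k) hk.
rewrite (eq_bigr _ (fun o _ => H a k hk i o)) (eq_bigr _ (fun j _ => H a k hk j (Some i))).
by rewrite (H a k.-1 hk1 i None).
Qed.

Lemma tof_comb s (F1 F2 : @flowvec R V A) a k i :
  traffic_of_flow d nt r (comb s F1 F2) a k i =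
  (1 - s) * traffic_of_flow d nt r F1 a k i + s * traffic_of_flow d nt r F2 a k i.
Proof.
rewrite /traffic_of_flow /comb !big_split -!mulr_sumr /=.
case: (is_last d nt a k i); case: (k == 0%N); ring.
Qed.


Lemma phi_kernel {phi : @strategy R V A} a k (y : V -> R) :
  traffic_well_defined nt r phi -> (k <= nt a)%N ->
  (forall i, y i = \sum_j y j * phi a k j (Some i)) ->
  (forall i, y i != 0 -> phi a k i None = 0) -> forall i, y i = 0.
Proof.
move=> tw hk hy hN i0.
have hz : forall i, y i * phi a k i None = 0.
  move=> i; case: (eqVneq (y i) 0) => [->|/hN ->]; by rewrite ?mul0r ?mulr0.
pose t := traffic nt r phi.
pose t'' : @trafficvec R V A := fun a' k' i => t a' k' i + (if (a' == a) && (k' == k) then y i else 0).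
have ht'' : is_traffic nt r phi t''.
  move=> a' k' hk' i; rewrite /t'' /t (traffic_is tw a' k' hk' i) -/t.
  under [X in _ = X + _]eq_bigr => j _ do rewrite mulrDl.
  rewrite big_split /= -/t.
  have -> : \sum_j (if (a' == a) && (k' == k) then y j else 0) * phi a' k' j (Some i)
        = (if (a' == a) && (k' == k) then y i else 0).
    case: ifP => [/andP [/eqP -> /eqP ->]|_]; first by rewrite -hy.
    by rewrite big1 // => j _; rewrite mul0r.
  have -> : (if k' == 0%N then r i a' else
     (t a' k'.-1 i + (if (a' == a) && (k'.-1 == k) then y i else 0)) * phi a' k'.-1 i None)
     = (if k' == 0%N then r i a' else t a' k'.-1 i * phi a' k'.-1 i None).
    case: ifP => // _; rewrite mulrDl; case: ifP => [/andP [/eqP -> /eqP ->]|_].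
      by rewrite hz addr0.
    by rewrite mul0r addr0.
  ring.
have := traffic_uniq tw ht'' a k hk i0; rewrite /t'' !eqxx /= -/t => h; lra.
Qed.

Lemma GP_gen (c q p rest T : R) : 0 < c -> 0 < q -> 0 <= p -> 0 <= rest -> 0 < T ->
  (c * (q * p) + rest) / T = 0 -> p = 0.
Proof.
move=> hc hq hp hr hT /eqP; rewrite mulf_eq0 invr_eq0 (gt_eqF hT) orbF => /eqP h.
have h0 : 0 <= c * (q * p) by rewrite !mulr_ge0 // ltW.
have : c * (q * p) = 0 by lra.
move/eqP; rewrite !mulf_eq0 (gt_eqF hc) (gt_eqF hq) /= => /eqP //.
Qed.

Section Pair.
Variables phi1 phi2 : @strategy R V A.
Hypotheses (H1 : feasible E d nt r phi1) (pos1 : positive_traffic nt r phi1)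
           (H2 : feasible E d nt r phi2) (pos2 : positive_traffic nt r phi2).

Definition tS s : @trafficvec R V A := fun a k i =>
  (1 - s) * traffic nt r phi1 a k i + s * traffic nt r phi2 a k i.
Definition gam s : @strategy R V A :=
  strategy_of_flow d nt r (comb s (flow nt r phi1) (flow nt r phi2)).

Lemma tofc s a k i : (k <= nt a)%N ->
  traffic_of_flow d nt r (comb s (flow nt r phi1) (flow nt r phi2)) a k i = tS s a k i.
Proof. by move=> hk; rewrite tof_comb !tof_flow. Qed.

Lemma gamE s {a k} i j : (k <= nt a)%N -> gam s a k i j =
  ((1 - s) * (traffic nt r phi1 a k i * phi1 a k i j) +
   s * (traffic nt r phi2 a k i * phi2 a k i j)) / tS s a k i.
Proof. by move=> hk; rewrite /gam /strategy_of_flow tofc. Qed.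

Lemma tS_pos {s a k} i : 0 <= s <= 1 -> (k <= nt a)%N -> 0 < tS s a k i.
Proof.
move=> /andP [s0 s1] hk; have := pos1 a k hk i; have := pos2 a k hk i.
rewrite /tS; nra.
Qed.

Lemma gamF {s a k} i j : 0 <= s <= 1 -> (k <= nt a)%N -> tS s a k i * gam s a k i j =
  (1 - s) * (traffic nt r phi1 a k i * phi1 a k i j) +
   s * (traffic nt r phi2 a k i * phi2 a k i j).
Proof.
move=> hs hk; rewrite gamE // mulrC divfK //; exact: lt0r_neq0 (tS_pos i hs hk).
Qed.

Lemma gam_fc {s} : 0 <= s <= 1 -> flow_conservation E d nt (gam s).
Proof.
move=> hs a k hk i.
have [h01a [hEa [hNa hsa]]] := H1.1 a k hk i.
have [h01b [hEb [hNb hsb]]] := H2.1 a k hk i.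
have tp := tS_pos i hs hk.
have p1 := pos1 a k hk i; have p2 := pos2 a k hk i.
move: (hs) => /andP [s0 s1].
split.
  move=> j; rewrite gamE //.
  have /andP [a0 a1] := h01a j; have /andP [b0 b1] := h01b j.
  have q1 : 0 <= traffic nt r phi1 a k i * phi1 a k i j by rewrite mulr_ge0 // ltW.
  have q2 : 0 <= traffic nt r phi2 a k i * phi2 a k i j by rewrite mulr_ge0 // ltW.
  have q1' : traffic nt r phi1 a k i * phi1 a k i j <= traffic nt r phi1 a k i.
    by apply: ler_piMr => //; exact: ltW.
  have q2' : traffic nt r phi2 a k i * phi2 a k i j <= traffic nt r phi2 a k i.
    by apply: ler_piMr => //; exact: ltW.
  apply/andP; split.
    apply: divr_ge0; last exact: ltW.
    nra.
  rewrite ler_pdivrMr // mul1r /tS; nra.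
split.
  by move=> j hE; rewrite gamE // (hEa j hE) (hEb j hE) !mulr0 addr0 mul0r.
split.
  by move=> hkn; rewrite gamE // (hNa hkn) (hNb hkn) !mulr0 addr0 mul0r.
rewrite (eq_bigr _ (fun o _ => gamE s i o hk)) -mulr_suml big_split /= -!mulr_sumr.
rewrite hsa hsb; case: ifP => _; first by rewrite !mulr0 addr0 mul0r.
rewrite !mulr1 mulfV //; exact: lt0r_neq0 tp.
Qed.

Lemma tS_traffic {s} : 0 <= s <= 1 -> is_traffic nt r (gam s) (tS s).
Proof.
move=> hs a k hk i.
have hk1 : (k.-1 <= nt a)%N by apply: leq_trans (leq_pred k) hk.
under [X in _ = X + _]eq_bigr => j _ do rewrite gamF //.
rewrite (gamF _ _ hs hk1).
have e1 := traffic_is H1.2 a k hk i; have e2 := traffic_is H2.2 a k hk i.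
rewrite /tS {1}e1 {1}e2.
move: e1 e2; case: (k == 0%N) => _ _; rewrite big_split -!mulr_sumr /=; ring.
Qed.

Lemma gam_sum s a k i : 0 <= s <= 1 -> (k <= nt a)%N ->
  \sum_o gam s a k i o = if is_last d nt a k i then 0 else 1.
Proof. by move=> hs hk; have [_ [_ [_ ->]]] := gam_fc hs a k hk i. Qed.

Lemma gam_kernel s a k : 0 <= s <= 1 -> (k <= nt a)%N ->
  forall x : V -> R, (forall i, x i = \sum_j x j * gam s a k j (Some i)) -> forall i, x i = 0.
Proof.
move=> hs hk.
have G0 : forall j o, 0 <= gam s a k j o.
  by move=> j o; have [hh _] := gam_fc hs a k hk j; by case/andP: (hh o).
have G1 : forall j, \sum_o gam s a k j o <= 1.
  by move=> j; rewrite gam_sum //; case: ifP => _; lra.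
move: (hs) => /andP [s0 s1].
have [sl1|sg1] := ltP s 1.
  apply: (@kernel0 R V (gam s a k) (phi1 a k)) => //.
  - by move=> j o; have [hh _] := H1.1 a k hk j; by case/andP: (hh o).
  - move=> j o; rewrite gamE // => h.
    apply: (@GP_gen _ _ _ _ _ _ _ _ _ _ h) => //; first by lra.
    + exact: pos1.
    + by have [hh _] := H1.1 a k hk j; by case/andP: (hh o).
    + apply: mulr_ge0 => //; apply: mulr_ge0; first exact: ltW (pos2 a k hk j).
      by have [hh _] := H2.1 a k hk j; by case/andP: (hh o).
    + exact: tS_pos.
  - by move=> j; rewrite gam_sum //; have [_ [_ [_ ->]]] := H1.1 a k hk j.
  - by move=> y hy hN; exact: (phi_kernel a k y H1.2 hk hy hN).
have s1' : s = 1 by lra.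
apply: (@kernel0 R V (gam s a k) (phi2 a k)) => //.
- by move=> j o; have [hh _] := H2.1 a k hk j; by case/andP: (hh o).
- move=> j o; rewrite gamE // addrC => h.
  apply: (@GP_gen _ _ _ _ _ _ _ _ _ _ h) => //; first by lra.
  + exact: pos2.
  + by have [hh _] := H2.1 a k hk j; by case/andP: (hh o).
  + apply: mulr_ge0; first by lra. apply: mulr_ge0; first exact: ltW (pos1 a k hk j).
    by have [hh _] := H1.1 a k hk j; by case/andP: (hh o).
  + exact: tS_pos.
- by move=> j; rewrite gam_sum //; have [_ [_ [_ ->]]] := H2.1 a k hk j.
- by move=> y hy hN; exact: (phi_kernel a k y H2.2 hk hy hN).
Qed.

Lemma gam_tw {s} : 0 <= s <= 1 -> traffic_well_defined nt r (gam s).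
Proof.
move=> hs; exists (tS s); split; first exact: tS_traffic.
move=> t' ht' a k.
have key : forall k, (k <= nt a)%N ->
    (k = 0%N \/ forall i, t' a k.-1 i = tS s a k.-1 i) ->
    forall i, t' a k i = tS s a k i.
  move=> k0 hk hprev i.
  have K := @gam_kernel s a k0 hs hk (fun i => t' a k0 i - tS s a k0 i).
  suff hx : forall i, t' a k0 i - tS s a k0 i =
      \sum_j (t' a k0 j - tS s a k0 j) * gam s a k0 j (Some i).
    by have := K hx i => /= h; lra.
  move=> {}i.
  rewrite (ht' a k0 hk i) (tS_traffic hs a k0 hk i).
  have -> : (if k0 == 0%N then r i a else t' a k0.-1 i * gam s a k0.-1 i None) =
            (if k0 == 0%N then r i a else tS s a k0.-1 i * gam s a k0.-1 i None).
    case: ifP => // /eqP k00; case: hprev => [//|-> //].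
  under [in RHS]eq_bigr => j _ do rewrite mulrBl.
  rewrite sumrB; ring.
elim: k => [|k IH] hk i; first by apply: key => //; left.
apply: key => //; right => /= j; apply: IH; exact: ltnW.
Qed.

Lemma gamP s : 0 <= s <= 1 ->
  feasible E d nt r (gam s) /\ positive_traffic nt r (gam s).
Proof.
move=> hs; split; first by split; [exact: gam_fc | exact: gam_tw].
move=> a k hk i; rewrite -(traffic_uniq (gam_tw hs) (tS_traffic hs) a k hk i).
exact: tS_pos.
Qed.

Lemma flow_gam s a k i j : 0 <= s <= 1 -> (k <= nt a)%N ->
  flow nt r (gam s) a k i j = comb s (flow nt r phi1) (flow nt r phi2) a k i j.
Proof.
move=> hs hk; rewrite /flow -(traffic_uniq (gam_tw hs) (tS_traffic hs) a k hk i).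
by rewrite gamF.
Qed.

Lemma lf_gam (L : A -> nat -> R) s i j : 0 <= s <= 1 ->
  link_flow nt r L (gam s) i j =
  (1 - s) * link_flow nt r L phi1 i j + s * link_flow nt r L phi2 i j.
Proof.
move=> hs; rewrite /link_flow !mulr_sumr -big_split; apply: eq_bigr => a _.
rewrite !mulr_sumr -big_split; apply: eq_bigr => k _.
rewrite flow_gam //; last by rewrite -ltnS ltn_ord.
by rewrite /comb mulrDr (mulrCA (L a k) (1 - s)) (mulrCA (L a k) s).
Qed.

Lemma wl_gam (w : V -> A -> nat -> R) s i : 0 <= s <= 1 ->
  workload nt r w (gam s) i =
  (1 - s) * workload nt r w phi1 i + s * workload nt r w phi2 i.
Proof.
move=> hs; rewrite /workload !mulr_sumr -big_split; apply: eq_bigr => a _.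
rewrite !mulr_sumr -big_split; apply: eq_bigr => k _.
rewrite flow_gam //; last by rewrite -ltnS ltn_ord.
by rewrite /comb mulrDr (mulrCA (w i a k) (1 - s)) (mulrCA (w i a k) s).
Qed.

Lemma pair_geo (L : A -> nat -> R) (w : V -> A -> nat -> R)
    (D : V -> V -> R -> R) (C : V -> R -> R) :
  (forall i j, E i j -> cost_fun (D i j)) -> (forall i, cost_fun (C i)) ->
  let gamma := fun s : R =>
       strategy_of_flow d nt r (comb s (flow nt r phi1) (flow nt r phi2)) in
  eqS nt (gamma 0) phi1 /\ eqS nt (gamma 1) phi2 /\
  (forall s, 0 <= s <= 1 -> feasible E d nt r (gamma s) /\ positive_traffic nt r (gamma s)) /\
  convex_on01 (fun s => total_cost E nt r L w D C (gamma s)).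
Proof.
move=> hD hC gamma; split.
  move=> a k hk i j; rewrite /gamma -/(gam 0) gamE // /tS.
  rewrite subr0 !mul1r !mul0r !addr0 mulrC mulKf //; exact: lt0r_neq0 (pos1 a k hk i).
split.
  move=> a k hk i j; rewrite /gamma -/(gam 1) gamE // /tS.
  rewrite subrr !mul0r !add0r !mul1r mulrC mulKf //; exact: lt0r_neq0 (pos2 a k hk i).
split; first by move=> s hs; exact: gamP.
move=> x y t hx hy ht /=; rewrite -!/(gam _).
have hu : 0 <= (1 - t) * x + t * y <= 1.
  move: hx hy ht => /andP [? ?] /andP [? ?] /andP [? ?]; apply/andP; split; nra.
rewrite /total_cost mulrDr mulrDr addrACA; apply: lerD.
  rewrite !mulr_sumr -big_split; apply: ler_sum => i _.
  rewrite !mulr_sumr -big_split; apply: ler_sum => j hE.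
  rewrite !lf_gam //.
  have [_ [_ [_ cv]]] := hD i j hE.
  set A1 := link_flow nt r L phi1 i j; set A2 := link_flow nt r L phi2 i j.
  have -> : (1 - ((1 - t) * x + t * y)) * A1 + ((1 - t) * x + t * y) * A2 =
     (1 - t) * ((1 - x) * A1 + x * A2) + t * ((1 - y) * A1 + y * A2) by ring.
  exact: cv.
rewrite !mulr_sumr -big_split; apply: ler_sum => i _.
rewrite !wl_gam //.
have [_ [_ [_ cv]]] := hC i.
set A1 := workload nt r w phi1 i; set A2 := workload nt r w phi2 i.
have -> : (1 - ((1 - t) * x + t * y)) * A1 + ((1 - t) * x + t * y) * A2 =
   (1 - t) * ((1 - x) * A1 + x * A2) + t * ((1 - y) * A1 + y * A2) by ring.
exact: cv.
Qed.

End Pair.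

Lemma model_main (L : A -> nat -> R) (w : V -> A -> nat -> R)
    (D : V -> V -> R -> R) (C : V -> R -> R) :
  (forall i j, E i j -> cost_fun (D i j)) -> (forall i, cost_fun (C i)) ->
  let P := fun phi : @strategy R V A => feasible E d nt r phi /\ positive_traffic nt r phi in
  (forall phi1 phi2, P phi1 -> P phi2 ->
     eqS nt (flow nt r phi1) (flow nt r phi2) -> eqS nt phi1 phi2) /\
  (forall phi, P phi -> eqS nt (strategy_of_flow d nt r (flow nt r phi)) phi) /\
  (forall phi1 phi2, P phi1 -> P phi2 ->
     let gamma := fun s : R =>
       strategy_of_flow d nt r (comb s (flow nt r phi1) (flow nt r phi2)) in
     eqS nt (gamma 0) phi1 /\ eqS nt (gamma 1) phi2 /\
     (forall s, 0 <= s <= 1 -> P (gamma s)) /\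
     convex_on01 (fun s => total_cost E nt r L w D C (gamma s))).
Proof.
move=> hD hC P; split; [|split].
- move=> p1 p2 [F1 q1] [F2 q2] H a k hk i j.
  rewrite -(@sof_flow p1 F1 q1 a k hk i j) -(@sof_flow p2 F2 q2 a k hk i j).
  by rewrite /strategy_of_flow (@tof_eqS _ _ a k i H hk) (H a k hk i j).
- by move=> phi [F q]; exact: sof_flow.
- move=> p1 p2 [F1 q1] [F2 q2]; exact: pair_geo.
Qed.

End Model2.

Theorem proposition3 (R : realType) (V A : finType) (E : rel V) (d : A -> V)
    (nt : A -> nat) (r : V -> A -> R) (L : A -> nat -> R) (w : V -> A -> nat -> R)
    (D : V -> V -> R -> R) (C : V -> R -> R) :
  (forall i j, E i j -> E j i) ->
  (forall i j, connect E i j) ->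
  (forall i a, 0 <= r i a) ->
  (forall a k, 0 < L a k) ->
  (forall i a k, 0 < w i a k) ->
  (forall i j, E i j -> cost_fun (D i j)) ->
  (forall i, cost_fun (C i)) ->
  let P := fun phi : strategy => feasible E d nt r phi /\ positive_traffic nt r phi in
  (* phi |-> f(phi) is injective on P *)
  (forall phi1 phi2, P phi1 -> P phi2 ->
     eqS nt (flow nt r phi1) (flow nt r phi2) -> eqS nt phi1 phi2) /\
  (* its inverse is f |-> phi(f) *)
  (forall phi, P phi -> eqS nt (strategy_of_flow d nt r (flow nt r phi)) phi) /\
  (* geodesic convexity of T *)
  (forall phi1 phi2, P phi1 -> P phi2 ->
     let gamma := fun s : R =>
       strategy_of_flow d nt r (comb s (flow nt r phi1) (flow nt r phi2)) in
     eqS nt (gamma 0) phi1 /\ eqS nt (gamma 1) phi2 /\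
     (forall s, 0 <= s <= 1 -> P (gamma s)) /\
     convex_on01 (fun s => total_cost E nt r L w D C (gamma s))).
Proof.
move=> _ _ _ _ _ hD hC; exact: model_main hD hC.
Qed.
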